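(* Let $A$ be a unital associative ring, $I\subset A$ a two-sided ideal, and $\{M_m\}$ a left $\{I^m\}$-module. Then there exists a special homomorphism $f\colon\{P_m\}\to\{M_m\}$ from a pseudo-free left $\{I^m\}$-module $\{P_m\}$ such that for every $m\geqslant1$ the image of $f_m$ equals $I^m\cdot M_m\subset M_m$.
   Context: A left $\{I^m\}$-module $\{M_m\}_{m\geqslant1}$ is a pro-abelian group (transition maps $\lambda_{k,m}\colon M_k\to M_m$, $k\geqslant m$) such that each $M_m$ is a left module over the non-unital ring $I^m$ and $\lambda_{k,m}(ax)=a\lambda_{k,m}(x)$ for $a\in I^k\subset I^m$, $x\in M_k$. A homomorphism is a family of $I^m$-module maps $f_m\colon M_m\to M'_m$ commuting with the transition maps. $\{P_m\}$ is pseudo-free if there are $I^m$-module isomorphisms $\varphi_m\colon I^m\otimes L_m\to P_m$ with $L_m$ free abelian groups, and homomorphisms $\sigma_{k,m}\colon L_k\to L_m$ ($k\geqslant m$) with $\lambda_{k,m}\circ\varphi_k=\varphi_m\circ(\iota\otimes\sigma_{k,m})$, where $\iota\colon I^k\to I^m$ is the inclusion. A homomorphism $f\colon\{P_m\}\to\{M_m\}$ from a pseudo-free module is special if there is a family of homomorphisms $g_m\colon L_m\to M_m$ compatible with the $\sigma_{k,m}$ and $\lambda_{k,m}$ such that $f_m(\varphi_m(a\otimes x))=a\,g_m(x)$ for all $a\in I^m$, $x\in L_m$. *)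

(* Defs.v *)
From HB Require Import structures.
From mathcomp Require Import all_boot all_order all_algebra.
Set Implicit Arguments. Unset Strict Implicit. Unset Printing Implicit Defensive.
Import GRing.Theory.
Local Open Scope ring_scope.

Inductive addspan (G : zmodType) (S : G -> Prop) : G -> Prop :=
  | addspan_in x : S x -> addspan S x
  | addspan0 : addspan S 0
  | addspanB x y : addspan S x -> addspan S y -> addspan S (x - y).

Definition is_ideal (A : pzRingType) (I : A -> Prop) : Prop :=
  [/\ I 0, (forall x y, I x -> I y -> I (x - y)),
      (forall r x, I x -> I (r * x)) & (forall r x, I x -> I (x * r))].

(* ipow I n = I^(n+1): ipow I 0 = I, I^(m+1) = additive span of I^m * I.
   ALL families below are indexed by n : nat standing for m = n+1 >= 1. *)
Fixpoint ipow (A : pzRingType) (I : A -> Prop) (n : nat) : A -> Prop :=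
  match n with
  | 0 => I
  | n'.+1 => addspan (fun z => exists u i, [/\ ipow I n' u, I i & z = u * i])
  end.

Definition ipt (A : pzRingType) (I : A -> Prop) (n : nat) := {a : A | ipow I n a}.

(* Left {I^m}-modules: component n is M_{n+1}, an abelian group with a left
   action of I^(n+1), together with transition maps lam k m : M_k -> M_m
   (m <= k) making {M_m} a pro-abelian group. *)
Record imod (A : pzRingType) (I : A -> Prop) := IMod {
  car : nat -> zmodType;
  act : forall n, ipt I n -> car n -> car n;
  lam : forall k m, (m <= k)%N -> car k -> car m;
  act_addr : forall n a (x y : car n), act a (x + y) = act a x + act a y;
  act_addl : forall n (a b c : ipt I n) (x : car n),
      sval c = sval a + sval b -> act c x = act a x + act b x;
  act_mul : forall n (a b c : ipt I n) (x : car n),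
      sval c = sval a * sval b -> act c x = act a (act b x);
  lam_add : forall k m (h : (m <= k)%N) (x y : car k),
      lam h (x + y) = lam h x + lam h y;
  lam_id : forall n (h : (n <= n)%N) (x : car n), lam h x = x;
  lam_comp : forall k l m (h1 : (m <= l)%N) (h2 : (l <= k)%N) (h3 : (m <= k)%N)
      (x : car k), lam h1 (lam h2 x) = lam h3 x;
  lam_act : forall k m (h : (m <= k)%N) (a : ipt I k) (a' : ipt I m) (x : car k),
      sval a = sval a' -> lam h (act a x) = act a' (lam h x)
}.

Definition additive_fun (G H : zmodType) (f : G -> H) : Prop :=
  forall x y, f (x + y) = f x + f y.

Definition imod_hom (A : pzRingType) (I : A -> Prop) (M N : imod I)
    (f : forall n, car M n -> car N n) : Prop :=
  [/\ (forall n, additive_fun (f n)),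
      (forall n (a : ipt I n) (x : car M n), f n (act a x) = act a (f n x))
    & (forall k m (h : (m <= k)%N) (x : car M k), f m (lam h x) = lam h (f k x))].

Definition is_free_ab (L : zmodType) : Prop :=
  exists (X : Type) (e : X -> L), forall (U : zmodType) (h : X -> U),
    exists u : L -> U, [/\ additive_fun u, (forall x, u (e x) = h x)
      & forall v : L -> U, additive_fun v -> (forall x, v (e x) = h x) ->
          forall y, v y = u y].

Definition biadd (A : pzRingType) (I : A -> Prop) (n : nat) (L U : zmodType)
    (c : ipt I n -> L -> U) : Prop :=
  (forall a x y, c a (x + y) = c a x + c a y) /\
  (forall (a b d : ipt I n) x, sval d = sval a + sval b -> c d x = c a x + c b x).

Definition is_tensor (A : pzRingType) (I : A -> Prop) (n : nat) (L T : zmodType)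
    (beta : ipt I n -> L -> T) : Prop :=
  biadd beta /\
  forall (U : zmodType) (c : ipt I n -> L -> U), biadd c ->
    exists u : T -> U, [/\ additive_fun u, (forall a x, u (beta a x) = c a x)
      & forall v : T -> U, additive_fun v -> (forall a x, v (beta a x) = c a x) ->
          forall y, v y = u y].

(* Pseudo-free structure on P: free abelian groups L_m, maps sigma_{k,m},
   and I^m-module isomorphisms phi_m : I^m (x) L_m -> P_m, encoded by
   beta_m(a, x) = phi_m(a (x) x).  beta_m universal biadditive says exactly
   that phi_m is an additive isomorphism; I^m-linearity of phi_m (where
   b.(a (x) x) = (ba) (x) x) and lam o phi_k = phi_m o (iota (x) sigma) are
   checked on the generators a (x) x. *)
Definition pseudo_free_data (A : pzRingType) (I : A -> Prop) (P : imod I)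
    (L : nat -> zmodType)
    (sigma : forall k m, (m <= k)%N -> L k -> L m)
    (beta : forall n, ipt I n -> L n -> car P n) : Prop :=
  [/\ (forall n, is_free_ab (L n)),
      (forall k m (h : (m <= k)%N), additive_fun (sigma k m h)),
      (forall n, is_tensor (beta n)),
      (forall n (a b c : ipt I n) (x : L n),
          sval c = sval b * sval a -> beta n c x = act b (beta n a x))
    & (forall k m (h : (m <= k)%N) (a : ipt I k) (a' : ipt I m) (x : L k),
          sval a = sval a' -> lam h (beta k a x) = beta m a' (sigma k m h x))].

Definition special (A : pzRingType) (I : A -> Prop) (P M : imod I)
    (L : nat -> zmodType)
    (sigma : forall k m, (m <= k)%N -> L k -> L m)
    (beta : forall n, ipt I n -> L n -> car P n)
    (f : forall n, car P n -> car M n) (g : forall n, L n -> car M n) : Prop :=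
  [/\ imod_hom f,
      (forall n, additive_fun (g n)),
      (forall k m (h : (m <= k)%N) (x : L k), lam h (g k x) = g m (sigma k m h x))
    & (forall n (a : ipt I n) (x : L n), f n (beta n a x) = act a (g n x))].

Definition imod_prod (A : pzRingType) (I : A -> Prop) (M : imod I) (n : nat) :
    car M n -> Prop :=
  addspan (fun y => exists (a : ipt I n) (x : car M n), y = act a x).

(* Main.v *)
Require Import Defs.
From HB Require Import structures.
From mathcomp Require Import all_boot all_order all_algebra.
From mathcomp Require Import finmap.
From mathcomp.multinomials Require Import monalg.
From Stdlib Require Import ProofIrrelevance ClassicalDescription.
Set Implicit Arguments. Unset Strict Implicit. Unset Printing Implicit Defensive.
Import GRing.Theory.
Local Open Scope ring_scope.


Section Gen.
Variables (U : zmodType).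
Lemma af0 (V : zmodType) (u : V -> U) : additive_fun u -> u 0 = 0.
Proof. move=> h; have e := h 0 0; rewrite addr0 in e. by apply: (@addrI _ (u 0)); rewrite addr0 -e. Qed.
Lemma afN (V : zmodType) (u : V -> U) : additive_fun u -> forall x, u (- x) = - u x.
Proof. move=> h x; apply/eqP; rewrite -subr_eq0 opprK -h addNr (af0 h) //. Qed.
Lemma afB (V : zmodType) (u : V -> U) : additive_fun u -> forall x y, u (x - y) = u x - u y.
Proof. by move=> h x y; rewrite h afN. Qed.
Lemma afMn (V : zmodType) (u : V -> U) : additive_fun u -> forall x n, u (x *+ n) = u x *+ n.
Proof. move=> h x; elim=> [|n IH]; first by rewrite !mulr0n af0. by rewrite !mulrS h IH. Qed.
Lemma afMz (V : zmodType) (u : V -> U) : additive_fun u -> forall x (z : int), u (x *~ z) = u x *~ z.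
Proof. move=> h x [n|n]; first by rewrite /= afMn. by rewrite !NegzE !mulrNz afN //= afMn. Qed.
Lemma afsum (V : zmodType) (u : V -> U) (I : Type) (r : seq I) (F : I -> V) : additive_fun u ->
  u (\sum_(i <- r) F i) = \sum_(i <- r) u (F i).
Proof. move=> h; elim: r => [|a r IH]; first by rewrite !big_nil af0. by rewrite !big_cons h IH. Qed.
End Gen.

Section Lift.
Local Open Scope fset_scope.
Variables (K : choiceType) (G U : zmodType).
Definition mlift (phi : K -> G -> U) (g : {malg G[K]}) : U := \sum_(k <- msupp g) phi k g@_k.
Variable phi : K -> G -> U.
Hypothesis phiA : forall k, additive_fun (phi k).
Lemma mliftEw (d : {fset K}) g : msupp g `<=` d -> mlift phi g = \sum_(k <- d) phi k g@_k.
Proof.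
move=> le; rewrite /mlift [LHS](big_fset_incl _ le) => //= x xd /mcoeff_outdom ->.
by rewrite af0.
Qed.
Lemma mlift_add : additive_fun (mlift phi).
Proof.
move=> g1 g2; set d := msupp g1 `|` msupp g2.
rewrite (mliftEw (d := d)); last exact: msuppD_le.
rewrite (mliftEw (d := d)) ?fsubsetUl // (mliftEw (d := d)) ?fsubsetUr //.
by rewrite -big_split /=; apply: eq_bigr => k _; rewrite mcoeffD phiA.
Qed.
Lemma mliftU c k : mlift phi << c *g k >> = phi k c.
Proof. by rewrite (mliftEw msuppU_le) big_seq_fset1 mcoeffUU. Qed.
End Lift.

Lemma malg_ext (K : choiceType) (G U : zmodType) (u v : {malg G[K]} -> U) :
  additive_fun u -> additive_fun v -> (forall c k, u << c *g k >> = v << c *g k >>) ->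
  forall g, u g = v g.
Proof.
move=> hu hv e g; rewrite (monalgE g) (afsum _ _ hu) (afsum _ _ hv).
by apply: eq_bigr => k _; apply: e.
Qed.

Definition iptz (A : pzRingType) (I : A -> Prop) (hI : is_ideal I) (n : nat) := ipt I n.

Section Ideal.
Variables (A : pzRingType) (I : A -> Prop) (hI : is_ideal I).

Lemma ipow0 n : ipow I n 0.
Proof. case: n => [|n] /=; [by case: hI => ? | exact: addspan0]. Qed.
Lemma ipowB n x y : ipow I n x -> ipow I n y -> ipow I n (x - y).
Proof. case: n => [|n] /=; [by case: hI => _ hB _ _; apply: hB | exact: addspanB]. Qed.
Lemma ipowD n x y : ipow I n x -> ipow I n y -> ipow I n (x + y).
Proof. move=> hx hy; rewrite -[y]opprK -[- y]add0r; apply: ipowB => //; apply: ipowB => //; exact: ipow0. Qed.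
Lemma ipowN n x : ipow I n x -> ipow I n (- x).
Proof. move=> hx; rewrite -[- x]add0r; apply: ipowB => //; exact: ipow0. Qed.
Lemma ipowMr n x r : ipow I n x -> ipow I n (x * r).
Proof.
case: n => [|n] /=; first by case: hI => _ _ _; apply.
elim=> [z [u [i [hu hi ->]]]| |x1 y1 _ h1 _ h2].
- apply: addspan_in; exists u, (i * r); split => //; last by rewrite mulrA.
  by case: hI hi => _ _ _; apply.
- by rewrite mul0r; apply: addspan0.
- by rewrite mulrBl; apply: addspanB.
Qed.
Lemma ipowMl n x r : ipow I n x -> ipow I n (r * x).
Proof.
elim: n x r => [|n IH] x r /=; first by case: hI => _ _ + _; apply.
elim=> [z [u [i [hu hi ->]]]| |x1 y1 _ h1 _ h2].
- apply: addspan_in; exists (r * u), i; split => //; [exact: IH | by rewrite mulrA].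
- by rewrite mulr0; apply: addspan0.
- by rewrite mulrBr; apply: addspanB.
Qed.
Lemma ipowS n x : ipow I n.+1 x -> ipow I n x.
Proof.
elim=> [z [u [i [hu hi ->]]]| |x1 y1 _ h1 _ h2].
- exact: ipowMr.
- exact: ipow0.
- exact: ipowB.
Qed.
Lemma ipow_le m k x : (m <= k)%N -> ipow I k x -> ipow I m x.
Proof.
elim: k x => [|k IH] x; first by rewrite leqn0 => /eqP ->.
rewrite leq_eqVlt => /orP [/eqP -> //| hm] hx.
by apply: IH => //; apply: ipowS.
Qed.

Lemma ipt_inj n (a b : ipt I n) : sval a = sval b -> a = b.
Proof. case: a b => a ha [b hb] /= e; subst b; f_equal; exact: proof_irrelevance. Qed.

Definition ipt_opt n (x : A) : option (iptz hI n) :=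
  match excluded_middle_informative (ipow I n x) with
  | left h => Some (exist _ x h) | right _ => None end.
Lemma iptK n : pcancel (fun a : iptz hI n => sval a) (@ipt_opt n).
Proof.
move=> a; rewrite /ipt_opt; case: excluded_middle_informative => [h|h].
  by congr Some; apply: ipt_inj.
by case: h; case: a.
Qed.
End Ideal.

HB.instance Definition _ A I hI n := Equality.copy (@iptz A I hI n) (pcan_type (@iptK A I hI n)).
HB.instance Definition _ A I hI n := Choice.copy (@iptz A I hI n) (pcan_type (@iptK A I hI n)).

Section IptZ.
Variables (A : pzRingType) (I : A -> Prop) (hI : is_ideal I) (n : nat).
Definition iz0 : iptz hI n := exist _ 0 (ipow0 hI n).
Definition izadd (a b : iptz hI n) : iptz hI n := exist _ (sval a + sval b) (ipowD hI (svalP a) (svalP b)).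
Definition izopp (a : iptz hI n) : iptz hI n := exist _ (- sval a) (ipowN hI (svalP a)).
Lemma izaddA : associative izadd. Proof. by move=> a b c; apply: ipt_inj; rewrite /= addrA. Qed.
Lemma izaddC : commutative izadd. Proof. by move=> a b; apply: ipt_inj; rewrite /= addrC. Qed.
Lemma izadd0 : left_id iz0 izadd. Proof. by move=> a; apply: ipt_inj; rewrite /= add0r. Qed.
Lemma izaddN : left_inverse iz0 izopp izadd. Proof. by move=> a; apply: ipt_inj; rewrite /= addNr. Qed.
HB.instance Definition _ := GRing.isZmodule.Build (iptz hI n) izaddA izaddC izadd0 izaddN.
End IptZ.

Section IptTh.
Variables (A : pzRingType) (I : A -> Prop) (hI : is_ideal I) (n : nat).
Lemma izvalD (a b : iptz hI n) : sval (a + b) = sval a + sval b. Proof. by []. Qed.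
Lemma izval_add : additive_fun (fun a : iptz hI n => sval a). Proof. by []. Qed.
Lemma izvalMz (a : iptz hI n) z : sval (a *~ z) = sval a *~ z.
Proof. exact: (afMz (@izval_add)). Qed.
Definition izmul (r : A) (a : iptz hI n) : iptz hI n := exist _ (r * sval a) (ipowMl hI r (svalP a)).
Definition izle m k (h : (m <= k)%N) (a : iptz hI k) : iptz hI m := exist _ (sval a) (ipow_le hI h (svalP a)).
End IptTh.

Lemma af_comp (U V W : zmodType) (u : V -> W) (v : U -> V) :
  additive_fun u -> additive_fun v -> additive_fun (fun x => u (v x)).
Proof. by move=> hu hv x y; rewrite hv hu. Qed.
Lemma af_add (U V : zmodType) (u v : U -> V) :
  additive_fun u -> additive_fun v -> additive_fun (fun x => u x + v x).
Proof. by move=> hu hv x y; rewrite hu hv addrACA. Qed.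
Lemma afU (K : choiceType) (G : zmodType) (k : K) : additive_fun (fun c : G => << c *g k >>).
Proof. by move=> x y; rewrite monalgUD. Qed.

Section Main.
Variables (A : pzRingType) (I : A -> Prop) (hI : is_ideal I) (M : imod I).

Local Notation X n := (car M n).
Local Notation Pn n := {malg (iptz hI n)[X n]}.
Local Notation Ln n := {malg int[X n]}.
Local Notation lamM := (@lam _ _ M _ _).
Local Notation actM := (@act _ _ M _).

Definition pact n (a : ipt I n) : Pn n -> Pn n :=
  mlift (fun k c => << izmul (sval a) c *g k >>).
Definition plam k m (h : (m <= k)%N) : Pn k -> Pn m :=
  mlift (fun x c => << izle h c *g lamM h x >>).

Lemma izmul_add n r : additive_fun (@izmul A I hI n r).
Proof. by move=> a b; apply: ipt_inj; rewrite /= mulrDr. Qed.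
Lemma izle_add k m (h : (m <= k)%N) : additive_fun (@izle A I hI m k h).
Proof. by move=> a b; apply: ipt_inj. Qed.

Lemma pact_phi n (a : ipt I n) (k : X n) : additive_fun (fun c : iptz hI n => << izmul (sval a) c *g k >>).
Proof. apply: af_comp; [exact: afU | exact: izmul_add]. Qed.
Lemma plam_phi k m (h : (m <= k)%N) (x : X k) : additive_fun (fun c : iptz hI k => << izle h c *g lamM h x >>).
Proof. apply: af_comp; [exact: afU | exact: izle_add]. Qed.

Lemma pactU n (a : ipt I n) c k : pact a << c *g k >> = << izmul (sval a) c *g k >>.
Proof. exact: (mliftU (@pact_phi n a)). Qed.
Lemma plamU k m (h : (m <= k)%N) c x : plam h << c *g x >> = << izle h c *g lamM h x >>.
Proof. exact: (mliftU (@plam_phi k m h)). Qed.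
Lemma pact_add n (a : ipt I n) : additive_fun (pact a).
Proof. exact/mlift_add/pact_phi. Qed.
Lemma plam_add k m (h : (m <= k)%N) : additive_fun (plam h).
Proof. exact/mlift_add/plam_phi. Qed.

Lemma P_act_addl n (a b c : ipt I n) (x : Pn n) :
  sval c = sval a + sval b -> pact c x = pact a x + pact b x.
Proof.
move=> e; move: x; apply: malg_ext; first exact: pact_add.
  exact: af_add (pact_add _) (pact_add _).
by move=> d k; rewrite !pactU -monalgUD; congr << _ *g _ >>; apply: ipt_inj; rewrite /= e mulrDl.
Qed.
Lemma P_act_mul n (a b c : ipt I n) (x : Pn n) :
  sval c = sval a * sval b -> pact c x = pact a (pact b x).
Proof.
move=> e; move: x; apply: malg_ext; first exact: pact_add.
  exact: af_comp (pact_add _) (pact_add _).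
by move=> d k; rewrite !pactU; congr << _ *g _ >>; apply: ipt_inj; rewrite /= e mulrA.
Qed.
Lemma P_lam_id n (h : (n <= n)%N) (x : Pn n) : plam h x = x.
Proof.
move: x; apply: malg_ext; first exact: plam_add.
  by [].
by move=> d k; rewrite plamU lam_id; congr << _ *g _ >>; apply: ipt_inj.
Qed.
Lemma P_lam_comp k l m (h1 : (m <= l)%N) (h2 : (l <= k)%N) (h3 : (m <= k)%N) (x : Pn k) :
  plam h1 (plam h2 x) = plam h3 x.
Proof.
move: x; apply: malg_ext; first exact: af_comp (plam_add _) (plam_add _).
  exact: plam_add.
by move=> d y; rewrite !plamU lam_comp; congr << _ *g _ >>; apply: ipt_inj.
Qed.
Lemma P_lam_act k m (h : (m <= k)%N) (a : ipt I k) (a' : ipt I m) (x : Pn k) :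
  sval a = sval a' -> plam h (pact a x) = pact a' (plam h x).
Proof.
move=> e; move: x; apply: malg_ext; first exact: af_comp (plam_add _) (pact_add _).
  exact: af_comp (pact_add _) (plam_add _).
by move=> d y; rewrite pactU !plamU pactU; congr << _ *g _ >>; apply: ipt_inj; rewrite /= e.
Qed.

Definition Pmod : imod I :=
  @IMod A I (fun n => Pn n) pact plam pact_add P_act_addl P_act_mul plam_add
    P_lam_id P_lam_comp P_lam_act.

End Main.

Section Main2.
Variables (A : pzRingType) (I : A -> Prop) (hI : is_ideal I) (M : imod I).

Local Notation X n := (car M n).
Local Notation Pn n := {malg (iptz hI n)[X n]}.
Local Notation Ln n := {malg int[X n]}.
Local Notation lamM := (@lam _ _ M _ _).
Local Notation actM := (@act _ _ M _).
Local Notation P := (Pmod hI M).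

Definition sig k m (h : (m <= k)%N) : Ln k -> Ln m :=
  mlift (fun x (z : int) => << z *g lamM h x >>).
Definition bet n (a : ipt I n) : Ln n -> Pn n :=
  mlift (fun x (z : int) => << (a : iptz hI n) *~ z *g x >>).
Definition ff n : Pn n -> X n := mlift (fun x (c : iptz hI n) => actM c x).
Definition gg n : Ln n -> X n := mlift (fun (x : X n) (z : int) => x *~ z).

Lemma sig_phi k m (h : (m <= k)%N) (x : X k) : additive_fun (fun z : int => << z *g lamM h x >>).
Proof. exact: afU. Qed.
Lemma bet_phi n (a : ipt I n) (x : X n) : additive_fun (fun z : int => << (a : iptz hI n) *~ z *g x >>).
Proof. by move=> y z; rewrite mulrzDr_tmp monalgUD. Qed.
Lemma ff_phi n (x : X n) : additive_fun (fun c : iptz hI n => actM c x).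
Proof. by move=> c d; apply: act_addl. Qed.
Lemma gg_phi n (x : X n) : additive_fun (fun z : int => x *~ z).
Proof. by move=> y z; rewrite mulrzDr_tmp. Qed.

Lemma sigU k m (h : (m <= k)%N) z x : sig h << z *g x >> = << z *g lamM h x >>.
Proof. exact: (mliftU (@sig_phi k m h)). Qed.
Lemma betU n (a : ipt I n) z x : bet a << z *g x >> = << (a : iptz hI n) *~ z *g x >>.
Proof. exact: (mliftU (@bet_phi n a)). Qed.
Lemma ffU n (c : iptz hI n) x : ff << c *g x >> = actM c x.
Proof. exact: (mliftU (@ff_phi n)). Qed.
Lemma ggU n z (x : X n) : gg << z *g x >> = x *~ z.
Proof. exact: (mliftU (@gg_phi n)). Qed.
Lemma sig_add k m (h : (m <= k)%N) : additive_fun (sig h).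
Proof. exact/mlift_add/sig_phi. Qed.
Lemma bet_add n (a : ipt I n) : additive_fun (bet a).
Proof. exact/mlift_add/bet_phi. Qed.
Lemma ff_add n : additive_fun (@ff n).
Proof. exact/mlift_add/ff_phi. Qed.
Lemma gg_add n : additive_fun (@gg n).
Proof. exact/mlift_add/gg_phi. Qed.

Lemma free_L n : is_free_ab (Ln n).
Proof.
exists (X n), (fun x => << (1 : int) *g x >>) => U h.
have hphi : forall x, additive_fun (fun z : int => h x *~ z).
  by move=> x y z; rewrite mulrzDr_tmp.
exists (mlift (fun x (z : int) => h x *~ z)); split.
- exact: mlift_add.
- by move=> x; rewrite (mliftU hphi) mulr1z.
- move=> v hv ev; apply: malg_ext => //; first exact: mlift_add.
  move=> z x; rewrite (mliftU hphi) -ev.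
  have -> : << z *g x >> = << (1 : int) *g x >> *~ z.
    by rewrite -(afMz (afU x)) -[z in LHS]intz.
  by rewrite (afMz hv).
Qed.

Lemma tensor_bet n : is_tensor (@bet n).
Proof.
have hb : biadd (@bet n).
  split; first by move=> a; apply: bet_add.
  move=> a b d x e; have -> : d = (a : iptz hI n) + b by apply: ipt_inj.
  move: x; apply: malg_ext; first exact: bet_add.
    exact: af_add (bet_add _) (bet_add _).
  by move=> z k; rewrite !betU mulrzDl_tmp monalgUD.
split=> // U c [c1 c2].
have hphi : forall k : X n, additive_fun (fun p : iptz hI n => c p << (1 : int) *g k >>).
  by move=> k p q; apply: c2.
have cz : forall (p : iptz hI n) k z, c (p *~ z) << (1 : int) *g k >> = c p << (1 : int) *g k >> *~ z.
  by move=> p k z; rewrite (afMz (hphi k)).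
have eU : forall (p : iptz hI n) k, bet p << (1 : int) *g k >> = << p *g k >>.
  by move=> p k; rewrite betU mulr1z.
exists (mlift (fun k (p : iptz hI n) => c p << (1 : int) *g k >>)); split.
- exact: mlift_add.
- move=> a x; move: x; apply: malg_ext.
  + exact: af_comp (mlift_add hphi) (bet_add _).
  + exact: c1.
  move=> z k; rewrite betU (mliftU hphi) cz.
  have -> : << z *g k >> = << (1 : int) *g k >> *~ z.
    by rewrite -(afMz (afU k)) -[z in LHS]intz.
  by rewrite (afMz (c1 a)).
- move=> v hv ev; apply: malg_ext => //; first exact: mlift_add.
  by move=> p k; rewrite (mliftU hphi) -eU ev.
Qed.

Lemma pfd : pseudo_free_data (P := P) sig bet.
Proof.
split.
- exact: free_L.
- exact: sig_add.
- exact: tensor_bet.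
- move=> n a b c x e; move: x; apply: malg_ext.
  + exact: bet_add.
  + exact: af_comp (pact_add _) (bet_add _).
  move=> z k; rewrite /= !betU pactU; congr << _ *g _ >>; apply: ipt_inj.
  by rewrite /= !izvalMz e mulrzAr.
- move=> k m h a a' x e; move: x; apply: malg_ext.
  + exact: af_comp (plam_add _) (bet_add _).
  + exact: af_comp (bet_add _) (sig_add _).
  move=> z y; rewrite /= betU plamU sigU betU; congr << _ *g _ >>; apply: ipt_inj.
  by rewrite /= !izvalMz e.
Qed.

Lemma spec : special (P := P) (M := M) sig bet ff gg.
Proof.
split.
- split.
  + exact: ff_add.
  + move=> n a x; move: x; apply: malg_ext.
    * exact: af_comp (@ff_add n) (pact_add _).
    * exact: af_comp (act_addr a) (@ff_add n).
    move=> c k; rewrite /= pactU !ffU; exact: act_mul.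
  + move=> k m h x; move: x; apply: malg_ext.
    * exact: af_comp (@ff_add m) (plam_add _).
    * exact: af_comp (lam_add h) (@ff_add k).
    move=> c y; rewrite /= plamU !ffU; apply/esym/lam_act => //.
- exact: gg_add.
- move=> k m h x; move: x; apply: malg_ext.
  + exact: af_comp (lam_add h) (@gg_add k).
  + exact: af_comp (@gg_add m) (sig_add _).
  move=> z y; rewrite sigU !ggU; exact: (afMz (lam_add h)).
- move=> n a x; move: x; apply: malg_ext.
  + exact: af_comp (@ff_add n) (bet_add _).
  + exact: af_comp (act_addr a) (@gg_add n).
  move=> z k; rewrite /= betU ffU ggU (afMz (act_addr a)).
  exact: (afMz (ff_phi k)).
Qed.

Lemma addspanD (G : zmodType) (S : G -> Prop) x y : addspan S x -> addspan S y -> addspan S (x + y).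
Proof.
move=> hx hy; rewrite -[y]opprK -[- y]add0r; apply: addspanB => //.
by apply: addspanB => //; apply: addspan0.
Qed.

Lemma addspan_sum (G : zmodType) (S : G -> Prop) (T : Type) (s : seq T) (F : T -> G) :
  (forall i, addspan S (F i)) -> addspan S (\sum_(i <- s) F i).
Proof.
move=> h; elim: s => [|k r IH]; first by rewrite big_nil; apply: addspan0.
by rewrite big_cons; apply: addspanD.
Qed.

Lemma image n (y : X n) : (exists p, ff p = y) <-> imod_prod y.
Proof.
split.
- case=> p <-; rewrite /ff /mlift; apply: addspan_sum => k.
  by apply: addspan_in; exists p@_k, k.
- elim=> [z [a [x ->]]| |x1 y1 _ [p1 <-] _ [p2 <-]].
  + by exists << (a : iptz hI n) *g x >>; rewrite ffU.
  + by exists 0; rewrite (af0 (@ff_add n)).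
  + by exists (p1 - p2); rewrite (afB (@ff_add n)).
Qed.

End Main2.

Theorem lemma1p4 (A : pzRingType) (I : A -> Prop) (hI : is_ideal I) (M : imod I) :
  exists (P : imod I) (L : nat -> zmodType)
         (sigma : forall k m, (m <= k)%N -> L k -> L m)
         (beta : forall n, ipt I n -> L n -> car P n)
         (f : forall n, car P n -> car M n) (g : forall n, L n -> car M n),
    [/\ pseudo_free_data sigma beta,
        special sigma beta f g
      & forall n (y : car M n), (exists p, f n p = y) <-> imod_prod y].
Proof.
exists (Pmod hI M), (fun n => {malg int[car M n]}), (@sig A I M), (@bet A I hI M),
  (@ff A I hI M), (@gg A I M).
split; [exact: pfd | exact: spec | exact: image].
Qed.
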